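(* Let $E$ be a finite set and $\mathcal{F}\subseteq 2^E$ a non-empty downward-closed set system that is not a matroid. Then there exist weights $w:E\to\mathbb{R}_{\ge 0}$ such that an optimal solution to the nominal problem $\max_{S\in\mathcal{F}} w(S)$ is not an optimal first-stage solution of the robust counterpart $$\max_{S\in\mathcal{F}}\ \min_{f\in E\cup\{\emptyset\}}\ \max_{\substack{e\in (E\setminus(S\cup\{f\}))\cup\{\emptyset\}\\ (S\setminus\{f\})\cup\{e\}\in\mathcal{F}}} w\big((S\setminus\{f\})\cup\{e\}\big).$$
   Context: Downward-closed: $X\in\mathcal{F}$, $X'\subseteq X$ imply $X'\in\mathcal{F}$. A non-empty downward-closed system is a matroid iff whenever $I,J\in\mathcal{F}$ with $|I|<|J|$ there is $g\in J\setminus I$ with $I\cup\{g\}\in\mathcal{F}$. $w(S)=\sum_{x\in S}w(x)$. In the robust counterpart, $f=\emptyset$ means no deletion and $e=\emptyset$ means no addition. *)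

(* Defs.v *)
From HB Require Import structures.
From mathcomp Require Import all_boot all_order all_algebra.
From mathcomp Require Import reals.
Set Implicit Arguments. Unset Strict Implicit. Unset Printing Implicit Defensive.
Import Order.TTheory GRing.Theory Num.Theory.
Local Open Scope ring_scope.

Section Defs.
Variable E : finType.

Definition downward_closed (F : {set {set E}}) : Prop :=
  forall X X' : {set E}, X \in F -> X' \subset X -> X' \in F.

Definition exchange_axiom (F : {set {set E}}) : Prop :=
  forall I J : {set E}, I \in F -> J \in F -> (#|I| < #|J|)%N ->
    exists2 g, g \in J :\: I & I :|: [set g] \in F.

Definition is_matroid (F : {set {set E}}) : Prop :=
  F != set0 /\ downward_closed F /\ exchange_axiom F.

Variable R : realType.

Definition wt (w : E -> R) (S : {set E}) : R := \sum_(x in S) w x.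

(* f = None means no deletion, e = None means no addition *)
Definition del (S : {set E}) (f : option E) : {set E} :=
  if f is Some x then S :\ x else S.
Definition ins (S : {set E}) (e : option E) : {set E} :=
  if e is Some y then y |: S else S.

(* e ranges over (E \ (S u {f})) u {emptyset} *)
Definition admissible_add (S : {set E}) (f e : option E) : bool :=
  if e is Some y then (y \notin S) && (Some y != f) else true.

(* The default value of the big max is the
   value of the candidate e = None, which is always admissible when S \in F
   and F is downward closed, so this is the genuine maximum. *)
Definition recovery_value (w : E -> R) (F : {set {set E}}) (S : {set E})
    (f : option E) : R :=
  \big[Num.max/wt w (del S f)]_(e : option E |
        admissible_add S f e && (ins (del S f) e \in F))
      wt w (ins (del S f) e).

(* outer minimum over f in E u {emptyset}; the default value is the value for
   f = None, itself one of the candidates, so this is the genuine minimum. *)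
Definition robust_value (w : E -> R) (F : {set {set E}}) (S : {set E}) : R :=
  \big[Num.min/recovery_value w F S None]_(f : option E)
      recovery_value w F S f.

Definition nominal_optimal (w : E -> R) (F : {set {set E}}) (S : {set E}) :=
  S \in F /\ forall S', S' \in F -> wt w S' <= wt w S.

Definition robust_optimal (w : E -> R) (F : {set {set E}}) (S : {set E}) :=
  S \in F /\ forall S', S' \in F -> robust_value w F S' <= robust_value w F S.

End Defs.

(* Main.v *)
Require Import Defs.
From HB Require Import structures.
From mathcomp Require Import all_boot all_order all_algebra.
From mathcomp Require Import reals.
Import Order.TTheory GRing.Theory Num.Theory.
Local Open Scope ring_scope.
From mathcomp Require Import zify.

Section Aux.
Variables (R : realType) (E : finType) (F : {set {set E}}).

Lemma rec_ge_def (w : E -> R) S f : wt w (del S f) <= recovery_value w F S f.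
Proof. exact: bigmax_ge_id. Qed.

Lemma rec_ge_cand (w : E -> R) S f y :
  admissible_add S f (Some y) -> ins (del S f) (Some y) \in F ->
  wt w (ins (del S f) (Some y)) <= recovery_value w F S f.
Proof. by move=> h1 h2; apply: (bigmax_sup (Some y)) => //; rewrite h1 h2. Qed.

Lemma rec_le (w : E -> R) S f L :
  wt w (del S f) <= L ->
  (forall y, admissible_add S f (Some y) -> ins (del S f) (Some y) \in F ->
     wt w (ins (del S f) (Some y)) <= L) ->
  recovery_value w F S f <= L.
Proof.
move=> h0 h; apply: bigmax_le => // [[y|]] /andP[] //= a b.
exact: h.
Qed.

Lemma rob_le (w : E -> R) S f : robust_value w F S <= recovery_value w F S f.
Proof. exact: bigmin_le. Qed.

Lemma rob_ge (w : E -> R) S L : (forall f, L <= recovery_value w F S f) ->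
  L <= robust_value w F S.
Proof. by move=> h; apply: le_bigmin. Qed.
End Aux.

Section W.
Local Open Scope nat_scope.
Variables (E : finType) (I : {set E}) (g h : E).
Definition nw (y : E) : nat := 5 * (y \in I) + 4 * (y == g) + 2 * (y == h).
Definition W (X : {set E}) : nat := \sum_(y in X) nw y.

Lemma sum_eq1 (X : {set E}) z : \sum_(y in X) ((y == z) : nat) = (z \in X).
Proof.
case: (boolP (z \in X)) => zX.
  rewrite (big_setD1 z) //= eqxx big1 // => y; rewrite !inE => /andP[/negbTE -> _] //.
by rewrite big1 // => y yX; case: eqP => // eyz; rewrite -eyz yX in zX.
Qed.

Lemma sum_in (X : {set E}) : \sum_(y in X) ((y \in I) : nat) = #|X :&: I|.
Proof.
rewrite -sum1_card; under [RHS]eq_bigl do rewrite in_setI.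
by rewrite big_mkcondr /=; apply: eq_bigr => y _; case: (y \in I).
Qed.

Lemma WE (X : {set E}) : W X = 5 * #|X :&: I| + 4 * (g \in X) + 2 * (h \in X).
Proof.
by rewrite -(sum_in X) -(sum_eq1 X g) -(sum_eq1 X h) !big_distrr -!big_split.
Qed.

Lemma W_add (X : {set E}) y : y \notin X -> W (y |: X) = nw y + W X.
Proof. by move=> yX; rewrite /W big_setU1. Qed.

Lemma W_del (X : {set E}) y : y \in X -> W X = nw y + W (X :\ y).
Proof. by move=> yX; rewrite /W (big_setD1 y). Qed.
End W.
Arguments nw {E}.
Arguments W {E}.
Arguments WE {E}.
Arguments W_add {E I g h}.
Arguments W_del {E I g h}.

Lemma setD1_notin (E : finType) (A : {set E}) y : y \notin A -> A :\ y = A.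
Proof. by move=> yA; apply/setP => z; rewrite !inE; case: eqP => // ->; rewrite (negbTE yA). Qed.

Section Arith.
Local Open Scope nat_scope.
Lemma ar_nom a b (bg bh : bool) : a < b -> 5*a + 4*bg + 2*bh <= 5*b+1.
Proof. by case: bg; case: bh => /=; lia. Qed.
Lemma ar_nom2 a b : a <= b -> 5*a + 4*false + 2*false <= 5*b+1.
Proof. simpl; lia. Qed.
Lemma ar_WJ n : 5*n + 4*true + 2*true = 5*n.+1 + 1.
Proof. simpl; lia. Qed.
Lemma ar_WI n : 5*n + 4*false + 2*false = 5*n.
Proof. simpl; lia. Qed.
Lemma ar_5 n : 0 < n -> 5 <= 5 * n.
Proof. lia. Qed.
Lemma ar_a n t : 5<=n -> t<=5 -> n-5+t <= n.
Proof. lia. Qed.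
Lemma ar_b m t e : t <= e -> 5+m-5+t <= e+m.
Proof. lia. Qed.
Lemma ar_c a b : b <= a + b - a.
Proof. lia. Qed.
Lemma ar_d n : 5 <= n -> n - 5 + 4 <= n + 1 - 4 -> False.
Proof. lia. Qed.
Lemma ar_e n : 5 <= n -> n - 5 + 2 <= n + 1 - 5 -> False.
Proof. lia. Qed.
End Arith.

Section Key.
Variables (R : realType) (E : finType) (F : {set {set E}}).
Hypothesis dF : downward_closed F.
Variables (I J : {set E}) (x g h : E).
Hypotheses (IF : I \in F) (JF : J \in F) (xI : x \in I) (xJ : x \notin J)
  (gh : g != h) (gJ : g \in J) (hJ : h \in J) (gI : g \notin I) (hI : h \notin I)
  (IJ : forall z, z \in I -> z != x -> z \in J)
  (JI : forall z, z \in J -> z \notin I -> (z == g) || (z == h))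
  (gIF : g |: I \notin F) (hIF : h |: I \notin F)
  (H : forall c, c \in I -> c \in J -> (g |: (I :\ c) \in F) || (h |: (I :\ c) \in F)).

Let w : E -> R := fun y => (nw I g h y)%:R.
Let WW := W I g h.

Lemma wtE X : wt w X = (WW X)%:R.
Proof. by rewrite /wt natr_sum. Qed.

Lemma nwI y : y \in I -> nw I g h y = 5.
Proof.
move=> yI; rewrite /nw yI; case: eqP => [e|_]; first by move: gI; rewrite -e yI.
by case: eqP => [e|_]; first by move: hI; rewrite -e yI.
Qed.

Lemma nw0 y : y \notin I -> y \notin J -> nw I g h y = 0.
Proof.
move=> yI yJ; rewrite /nw (negbTE yI); case: eqP => [e|_]; first by rewrite e gJ in yJ.
by case: eqP => [e|_]; first by rewrite e hJ in yJ.
Qed.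

Lemma nwg : nw I g h g = 4.
Proof. by rewrite /nw (negbTE gI) eqxx (negbTE gh). Qed.

Lemma nwh : (2 <= nw I g h h)%N.
Proof. by rewrite /nw (negbTE hI) eqxx /=; apply: leq_addl. Qed.

Lemma cardIJ : (#|J :&: I|.+1 = #|I|)%N.
Proof.
rewrite (cardsD1 x I) xI; congr (_.+1); apply: eq_card => z; rewrite !inE.
case: eqP => [->|/eqP zx]; first by rewrite (negbTE xJ).
case zI: (z \in I); last by rewrite andbF.
by rewrite (IJ _ zI zx).
Qed.

Lemma WI : WW I = (5 * #|I|)%N.
Proof. by rewrite /WW WE setIid (negbTE gI) (negbTE hI) ar_WI. Qed.

Lemma WJ : WW J = (WW I + 1)%N.
Proof. by rewrite WI /WW WE gJ hJ -cardIJ ar_WJ. Qed.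

Lemma nominal X : X \in F -> (WW X <= WW J)%N.
Proof.
move=> XF; rewrite WJ WI /WW WE.
have cX : (#|X :&: I| <= #|I|)%N by apply: subset_leq_card; apply: subsetIr.
case: (boolP ((g \in X) || (h \in X))) => [ghX|].
  have : (#|X :&: I| < #|I|)%N.
    apply: proper_card; rewrite properE subsetIr /= subsetI subxx andbT.
    apply/negP => IX; case/orP: ghX => [gX|hX].
      by move/negP: gIF; apply; apply: (dF _ _ XF); rewrite subUset sub1set gX IX.
    by move/negP: hIF; apply; apply: (dF _ _ XF); rewrite subUset sub1set hX IX.
  exact: ar_nom.
by rewrite negb_or => /andP[/negbTE -> /negbTE ->]; apply: ar_nom2.
Qed.

Lemma WI5 : (5 <= WW I)%N.
Proof. rewrite WI; apply: ar_5; by apply/card_gt0P; exists x. Qed.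

Lemma robI_ge t : (t <= 5)%N ->
  (forall y, y \in I -> exists e, [/\ e \notin I, (t <= nw I g h e)%N & e |: (I :\ y) \in F]) ->
  ((WW I - 5 + t)%N%:R <= robust_value w F I).
Proof.
move=> t5 Hy; apply: rob_ge => -[y|]; last first.
  apply: le_trans (@rec_ge_def _ _ F w _ _); rewrite /= wtE ler_nat; apply: ar_a => //; exact: WI5.
case: (boolP (y \in I)) => yI; last first.
  apply: le_trans (@rec_ge_def _ _ F w _ _); rewrite /= setD1_notin // wtE ler_nat; apply: ar_a => //; exact: WI5.
have [e [eI te eF]] := Hy y yI.
have ey : Some e != Some y by apply/eqP => -[ey]; rewrite ey yI in eI.
apply: le_trans (@rec_ge_cand _ _ F w I (Some y) e _ _) => //=; last by rewrite eI.
rewrite wtE ler_nat /WW W_add; last by rewrite !inE negb_and eI orbT.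
rewrite (@W_del _ I g h I y yI) nwI //; exact: ar_b.
Qed.

Lemma robJ_le z : z \in J ->
  (forall y, y \notin J -> y != z -> y |: (J :\ z) \in F -> nw I g h y = 0) ->
  robust_value w F J <= (WW J - nw I g h z)%N%:R.
Proof.
move=> zJ Hy; apply: le_trans (@rob_le _ _ F w J (Some z)) _.
have eJ : WW J = (nw I g h z + WW (J :\ z))%N by rewrite /WW (@W_del _ I g h J z zJ).
apply: rec_le => /=.
  by rewrite wtE ler_nat eJ ar_c.
move=> y /andP[yJ yz] yF; rewrite wtE ler_nat /WW W_add; last by rewrite !inE negb_and yJ orbT.
have yz' : y != z by apply/eqP => e; move/eqP: yz; rewrite e.
by rewrite (Hy y yJ yz' yF) add0n -/WW eJ ar_c.
Qed.

Lemma key : exists w : E -> R, (forall x, 0 <= w x) /\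
    exists S : {set E}, nominal_optimal w F S /\ ~ robust_optimal w F S.
Proof.
exists w; split; first by move=> y; rewrite /w ler0n.
exists J; split.
  by split => // S' S'F; rewrite !wtE ler_nat; apply: nominal.
case=> _ /(_ I IF) Hle.
case: (boolP [forall c in I, (c \in J) ==> (x |: (J :\ c) \in F)]) => [/forall_inP Hc|].
  have lo := robI_ge 4 isT.
  have up := robJ_le g gJ.
  have : ((WW I - 5 + 4)%N%:R <= (WW J - nw I g h g)%N%:R :> R).
    apply: le_trans (lo _) (le_trans Hle (up _)).
      move=> y yI; exists g; split => //; first by rewrite nwg.
      case: (eqVneq y x) => [->|yx].
        by apply: (dF _ _ JF); rewrite subUset sub1set gJ /=; apply/subsetP => z;
          rewrite !inE => /andP[zx zI]; exact: IJ.
      have yJ := IJ _ yI yx.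
      apply: (dF _ _ (implyP (Hc y yI) yJ)); apply/subsetP => z; rewrite !inE.
      case/orP => [/eqP ->|/andP[zy zI]].
        rewrite gJ andbT; apply/orP; right; apply/eqP => e; by move: gI; rewrite e yI.
      case: (eqVneq z x) => [//|zx].
      by rewrite zy (IJ _ zI zx).
    move=> y yJ yg yF.
    case: (boolP (y \in I)) => yI; last by rewrite nw0.
    case: (eqVneq y x) => [ex|yx]; last by rewrite (IJ _ yI yx) in yJ.
    move/negP: hIF; case; apply: (dF _ _ yF); apply/subsetP => z; rewrite !inE.
    case/orP => [/eqP ->|zI]; first by rewrite hJ [h == g]eq_sym gh orbT.
    case: (eqVneq z x) => [->|zx]; first by rewrite ex ?eqxx.
    rewrite (IJ _ zI zx) andbT; apply/orP; right; apply/eqP => e; by move: gI; rewrite -e zI.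
  rewrite ler_nat nwg WJ; apply: ar_d; exact: WI5.
rewrite negb_forall_in => /existsP[c /andP[cI]]; rewrite negb_imply => /andP[cJ xF].
have lo := robI_ge 2 isT.
have up := robJ_le c cJ.
have : ((WW I - 5 + 2)%N%:R <= (WW J - nw I g h c)%N%:R :> R).
  apply: le_trans (lo _) (le_trans Hle (up _)).
    move=> y yI; case: (eqVneq y x) => [->|yx].
      exists g; split => //; first by rewrite nwg.
      by apply: (dF _ _ JF); rewrite subUset sub1set gJ /=; apply/subsetP => z;
        rewrite !inE => /andP[zx zI]; exact: IJ.
    have yJ := IJ _ yI yx.
    case/orP: (H _ yI yJ) => [gF|hF]; [exists g | exists h]; split => //.
      by rewrite nwg.
    exact: nwh.
  move=> y yJ yc yF.
  case: (boolP (y \in I)) => yI; last by rewrite nw0.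
  case: (eqVneq y x) => [ex|yx]; last by rewrite (IJ _ yI yx) in yJ.
  by move: xF; rewrite -ex yF.
rewrite ler_nat nwI // WJ; apply: ar_e; exact: WI5.
Qed.
End Key.

Lemma a_pos (E : finType) (F : {set {set E}}) (dF : downward_closed F) (I J : {set E}) :
  J \in F -> #|J| = #|I|.+1 -> (forall y, y \in J -> y \notin I -> y |: I \notin F) ->
  (0 < #|I :\: J|)%N.
Proof.
move=> JF cJ HJ; rewrite card_gt0; apply/negP => /eqP/eqP; rewrite setD_eq0 => IJ.
have : ~~ (J \subset I) by apply/negP => /subset_leq_card; rewrite cJ ltnn.
case/subsetPn => y yJ yI.
by move/negP: (HJ y yJ yI); apply; apply: (dF _ _ JF); rewrite subUset sub1set yJ IJ.
Qed.

Arguments a_pos {E F} dF {I J}.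

Lemma exists_new (E : finType) (I J : {set E}) : (#|I| < #|J|)%N -> exists2 y, y \in J & y \notin I.
Proof.
move=> lt; apply/subsetPn; apply/negP => /subset_leq_card; rewrite leqNgt lt //.
Qed.

Lemma main (R : realType) (E : finType) (F : {set {set E}}) (dF : downward_closed F) n :
  forall I J : {set E}, (#|I| + #|I :\: J| <= n)%N -> I \in F -> J \in F ->
  #|J| = #|I|.+1 -> (forall y, y \in J -> y \notin I -> y |: I \notin F) ->
  exists w : E -> R, (forall x, 0 <= w x) /\
    exists S : {set E}, nominal_optimal w F S /\ ~ robust_optimal w F S.
Proof.
elim: n => [|n IH] I J Hmu IF JF cJ HJ.
  have := a_pos dF JF cJ HJ; move: Hmu; move: #|I :\: J| #|I| => a b; timeout 20 lia.
have apos := a_pos dF JF cJ HJ.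
have [x xIJ] : exists x, x \in I :\: J by apply/card_gt0P.
have xI : x \in I by move: xIJ; rewrite inE => /andP[].
have xJ : x \notin J by move: xIJ; rewrite inE => /andP[].
have cIx : #|I| = (#|I :\ x|).+1 by rewrite (cardsD1 x I) xI.
case: (boolP (#|I :\: J| == 1%N)) => [a1|a2].
  have IJ : forall z, z \in I -> z != x -> z \in J.
    move=> z zI zx; case: (boolP (z \in J)) => // zJ.
    case/cards1P: a1 => x0 e.
    have : x \in I :\: J by [].
    have : z \in I :\: J by rewrite inE zJ zI.
    by rewrite e !inE => /eqP zx0 /eqP xx0; rewrite zx0 xx0 eqxx in zx.
  have c2 : #|J :\: I| == 2%N.
    have e1 := cardsID J I; have e2 := cardsID I J; rewrite setIC in e2.
    move/eqP: a1 e1 e2 cJ; move: #|J :\: I| #|I :\: J| #|J :&: I| #|I| #|J| => p q r s t.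
    clear; timeout 20 lia.
  case/cards2P: c2 => g [h [gh eJI]].
  have gJI : g \in J :\: I by rewrite eJI !inE eqxx.
  have hJI : h \in J :\: I by rewrite eJI !inE eqxx orbT.
  move: gJI hJI; rewrite !inE => /andP[gI gJ] /andP[hI hJ].
  have gIF := HJ g gJ gI; have hIF := HJ h hJ hI.
  case: (boolP [forall c in I, (c \in J) ==> ((g |: (I :\ c) \in F) || (h |: (I :\ c) \in F))]) => [/forall_inP Hc|].
    apply: (@key R E F dF I J x g h IF JF xI xJ gh gJ hJ gI hI IJ gIF hIF) => c cIm cJm.
    exact: (implyP (Hc c cIm) cJm).
  rewrite negb_forall_in => /exists_inP[c cIm]; rewrite negb_imply negb_or => /andP[cJm /andP[gF hF]].
  apply: (IH (I :\ c) (J :\ c)).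
  - have sub : (I :\ c) :\: (J :\ c) \subset I :\: J.
      apply/subsetP => z; rewrite !inE => /andP[zJ /andP[zc zI]].
      by rewrite zI andbT; move: zJ; rewrite zc.
    have := subset_leq_card sub; have := cardsD1 c I; rewrite cIm.
    move: Hmu; move: #|I :\: J| #|(I :\ c) :\: (J :\ c)| #|I :\ c| #|I| => p q r s.
    clear; timeout 20 lia.
  - by apply: (dF _ _ IF); apply: subD1set.
  - by apply: (dF _ _ JF); apply: subD1set.
  - have := cardsD1 c I; have := cardsD1 c J; rewrite cIm cJm.
    move: cJ; move: #|I :\ c| #|J :\ c| #|I| #|J| => p q r s.
    clear; timeout 20 lia.
  - move=> y; rewrite !inE => /andP[yc yJ]; rewrite negb_and yc /= => yI.
    have : y \in J :\: I by rewrite inE yI yJ.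
    by rewrite eJI !inE => /orP[] /eqP ->.
have a2' : (2 <= #|I :\: J|)%N by move: apos a2; move: #|I :\: J| => p; clear; timeout 20 lia.
case: (boolP [exists g in J :\: I, g |: (I :\ x) \in F]) => [/exists_inP[g gJI gF]|nog].
  move: (gJI); rewrite inE => /andP[gI gJ].
  have gIx : g \notin I :\ x by rewrite inE negb_and gI orbT.
  case: (boolP [exists h in J :\: I, (h != g) && (h |: (g |: (I :\ x)) \in F)]) => [/exists_inP[h hJI /andP[hg hF]]|noh].
    move: (hJI); rewrite inE => /andP[hI hJ].
    have hgIx : h \notin g |: (I :\ x) by rewrite !inE negb_or hg negb_and hI orbT.
    apply: (IH I (h |: (g |: (I :\ x)))).
    - have sub : I :\: (h |: (g |: (I :\ x))) \subset [set x].
        apply/subsetP => z; rewrite !inE => /andP[]; rewrite !negb_or => /and3P[_ _].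
        by rewrite negb_and negbK => /orP[->|/negbTE ->].
      have := subset_leq_card sub; rewrite cards1.
      move: Hmu a2'; move: #|I :\: J| #|I :\: (h |: (g |: (I :\ x)))| #|I| => p q r.
      clear; timeout 20 lia.
    - by [].
    - by [].
    - rewrite !cardsU1 hgIx gIx cIx /=; clear; timeout 20 lia.
    - move=> y; rewrite !inE => /orP[/eqP ->|/orP[/eqP ->|/andP[_ yI]]] yI'.
      + exact: HJ.
      + exact: HJ.
      + by rewrite yI in yI'.
  apply: (IH (g |: (I :\ x)) J).
  - have sub : (g |: (I :\ x)) :\: J \subset (I :\: J) :\ x.
      apply/subsetP => z; rewrite !inE => /andP[zJ /orP[/eqP zg|/andP[-> ->]]]; last by rewrite zJ.
      by rewrite zg gJ in zJ.
    have := subset_leq_card sub; have := cardsD1 x (I :\: J); rewrite xIJ.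
    have := cardsU1 g (I :\ x); rewrite gIx.
    move: Hmu cIx; move: #|I :\: J| #|(g |: (I :\ x)) :\: J| #|(I :\: J) :\ x| #|I| #|I :\ x| #|g |: (I :\ x)| => p q r s t u.
    clear; timeout 20 lia.
  - by [].
  - by [].
  - rewrite cardsU1 gIx cJ cIx /=; clear; timeout 20 lia.
  - move=> y yJ; rewrite !inE negb_or negb_and negbK => /andP[yg /orP[/eqP yx|yI]].
      by move: xJ; rewrite -yx yJ.
    have : y \in J :\: I by rewrite inE yI yJ.
    move/(elimT exists_inPn noh) => /=; by rewrite yg.
have [b bJ bI] : exists2 b, b \in J & b \notin I by apply: exists_new; rewrite cJ.
apply: (IH (I :\ x) (J :\ b)).
- have sub : (I :\ x) :\: (J :\ b) \subset I :\: J.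
    apply/subsetP => z; rewrite !inE => /andP[zJ /andP[zx zI]]; rewrite zI andbT.
    move: zJ; rewrite negb_and negbK => /orP[/eqP zb|//]; by rewrite -zb zI in bI.
  have := subset_leq_card sub.
  move: Hmu cIx; move: #|I :\: J| #|(I :\ x) :\: (J :\ b)| #|I| #|I :\ x| => p q r s.
  clear; timeout 20 lia.
- by apply: (dF _ _ IF); apply: subD1set.
- by apply: (dF _ _ JF); apply: subD1set.
- have := cardsD1 b J; rewrite bJ.
  move: cJ cIx; move: #|J :\ b| #|J| #|I| #|I :\ x| => p q r s.
  clear; timeout 20 lia.
- move=> y; rewrite !inE => /andP[yb yJ]; rewrite negb_and negbK => /orP[/eqP yx|yI].
    by move: xJ; rewrite -yx yJ.
  have : y \in J :\: I by rewrite inE yI yJ.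
  by move/(elimT exists_inPn nog).
Qed.


Lemma trim (E : finType) k m : forall J : {set E}, #|J| = (k + m)%N ->
  exists2 J' : {set E}, J' \subset J & #|J'| = k.
Proof.
elim: m => [|m IH] J cJ; first by exists J; rewrite ?subxx // cJ addn0.
have [y yJ] : exists y, y \in J by apply/card_gt0P; rewrite cJ addnS.
have cJy : #|J :\ y| = (k + m)%N.
  by move: cJ; rewrite (cardsD1 y J) yJ addnS add1n => -[].
have [J' sJ' cJ'] := IH _ cJy; exists J' => //.
by apply: subset_trans sJ' (subD1set _ _).
Qed.

Theorem theorem2 (R : realType) (E : finType) (F : {set {set E}}) :
  F != set0 -> downward_closed F -> ~ is_matroid F ->
  exists w : E -> R, (forall x, 0 <= w x) /\
    exists S : {set E}, nominal_optimal w F S /\ ~ robust_optimal w F S.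
Proof.
move=> F0 dF nm.
have : ~~ [forall I : {set E}, [forall J : {set E},
    [&& I \in F, J \in F & (#|I| < #|J|)%N] ==> [exists g in J :\: I, I :|: [set g] \in F]]].
  apply/negP => /forallP H; apply: nm; split => //; split => // I J IF JF lt.
  have := forallP (H I) J; rewrite IF JF lt /= => /exists_inP[g g1 g2]; by exists g.
case/forallPn => I /forallPn [J]; rewrite negb_imply => /andP[/and3P[IF JF lt]].
rewrite negb_exists_in => /forall_inP nog.
have [J' sJ' cJ'] := @trim E (#|I|.+1) (#|J| - #|I|.+1) J (esym (subnKC lt)).
apply: (@main R E F dF (#|I| + #|I :\: J'|) I J') => //.
  exact: (dF _ _ JF).
move=> y yJ' yI; have yJ : y \in J := subsetP sJ' y yJ'.
have := nog y; rewrite inE yI yJ setUC => /(_ isT) //.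
Qed.
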